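(* Let $L_*\ge3$ and let $\{G_n\}_{n\in\mathbb N}$ be the replacement graphs of the iterated graph system $\mathfrak R(1,L_* )$. Then for every $m>1$, every non-collapsing path in $G_m$ contains at most two distinct vertices.
   Context: Graphs: $(V,E)$, $V$ finite non-empty, $E\subseteq V\times V$, $(x,y)\in E\Rightarrow(y,x)\notin E$; $\{x,y\}\in E$ means either orientation; a path is a sequence $[x_1,\dots,x_k]$ with $\{x_i,x_{i+1}\}\in E$. An iterated graph system consists of a connected graph $G_1=(S,E)$, a finite set $\mathcal T$ of types, a surjective typing $\mathfrak t:E\to\mathcal T$ and non-empty gluing rules $I_t\subseteq S\times S$. With $W_m=S^m$, $[w]_k=w_1\cdots w_k$ and $|w\wedge v|=\min\{k:[w]_k\ne[v]_k\}$ for distinct words of equal length, the replacement graphs $G_m=(W_m,E_m)$ are defined recursively: $(w,v)\in E_{m+1}$ iff either (1) $[w]_m=[v]_m$ and $(w_{m+1},v_{m+1})\in E$ (type $\mathfrak t(w_{m+1},v_{m+1})$), or (2) $([w]_m,[v]_m)\in E_m$ and $(w_{m+1},v_{m+1})\in I_{\mathfrak t([w]_m,[v]_m)}$ (type $\mathfrak t([w]_m,[v]_m)$). The system $\mathfrak R(1,L_* )$ has $S=\{1,\dots,L_*\}$, a single type $t_1$, edges $E=\{(k,k+1):1\le k<L_*\}$ all of type $t_1$, and $I_{t_1}=\{(L_*,1)\}$. For $n>1$, a path $[w^{(1)},\dots,w^{(k)}]$ in $G_n$ is non-collapsing if $|w^{(i)}\wedge w^{(i+1)}|<n$ for all $i=1,\dots,k-1$.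 *)

(* Defs.v *)
From mathcomp Require Import all_boot.
Set Implicit Arguments. Unset Strict Implicit. Unset Printing Implicit Defensive.

Section IGS.
Variables (S : eqType) (T : Type).
Variables (alph : seq S) (E : rel S) (typ : S -> S -> T) (I : T -> rel S).

Definition igs_vertex (m : nat) (w : seq S) : bool :=
  (size w == m) && all (fun a => a \in alph) w.

(* E_0 is empty (G_0 is the single empty word); the recursion at m = 0
   therefore yields exactly G_1 = (S, E) with typing typ.  For m.+1:
   rule (1): same m-prefix and (w_{m+1}, v_{m+1}) in E (type typ ..);
   rule (2): (prefix w, prefix v) in E_m with type t and
             (w_{m+1}, v_{m+1}) in I_t (type t). *)
Fixpoint igs_edge (m : nat) (w v : seq S) : option T :=
  match m with
  | 0 => None
  | m'.+1 =>
    match drop m' w, drop m' v with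
    | [:: a], [:: b] =>
        if (take m' w == take m' v) && E a b then Some (typ a b)
        else match igs_edge m' (take m' w) (take m' v) with
             | Some t => if I t a b then Some t else None
             | None => None
             end
    | _, _ => None
    end
  end.

Definition igs_edgeb (m : nat) (w v : seq S) : bool :=
  if igs_edge m w v is Some _ then true else false.

Definition igs_adj (m : nat) (w v : seq S) : bool :=
  igs_edgeb m w v || igs_edgeb m v w.

Definition igs_path (m : nat) (p : seq (seq S)) : Prop :=
  all (igs_vertex m) p /\
  (forall i, i.+1 < size p -> igs_adj m (nth [::] p i) (nth [::] p i.+1)).
End IGS.

Definition wedge {S : eqType} (w v : seq S) : nat :=
  find (fun k => take k w != take k v) (iota 0 (size w).+1).

Definition noncollapsing {S : eqType} (n : nat) (p : seq (seq S)) : Prop :=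
  forall i, i.+1 < size p -> wedge (nth [::] p i) (nth [::] p i.+1) < n.

Definition R1_alph (L : nat) : seq nat := iota 1 L.
Definition R1_E (L : nat) : rel nat := fun a b => (1 <= a) && (a < L) && (b == a.+1).
Definition R1_typ : nat -> nat -> unit := fun _ _ => tt.
Definition R1_I (L : nat) : unit -> rel nat := fun _ a b => (a == L) && (b == 1).

Definition R1_path (L m : nat) (p : seq (seq nat)) : Prop :=
  igs_path (R1_alph L) (R1_E L) R1_typ (R1_I L) m p.

(* Main.v *)
Require Import Defs.
From mathcomp Require Import all_boot.

Section S.
Variable L : nat.
Hypothesis HL : 3 <= L.

Local Notation ed n w v := (igs_edgeb (R1_E L) R1_typ (R1_I L) n w v).

Lemma ed_char n w v : ed n.+1 w v -> exists c d, drop n w = [:: c] /\ drop n v = [:: d] /\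
  ((take n w = take n v /\ 1 <= c /\ c < L /\ d = c.+1) \/
   (ed n (take n w) (take n v) /\ c = L /\ d = 1)).
Proof.
rewrite /igs_edgeb /=.
case: (drop n w) => [|c [|? ?]] //=; case: (drop n v) => [|d [|? ?]] //=.
move=> H; exists c, d; do 2 split => //; move: H.
case: ifP => [/andP [/eqP Ht] | _].
  by rewrite /R1_E => /andP [/andP [H1 H2] /eqP Hd] _; left.
case: (igs_edge _ _ _ n _ _) => [t|] //.
by rewrite /R1_I; case: ifP => // /andP [/eqP -> /eqP ->] _; right.
Qed.

Lemma ed0 w v : ed 0 w v = false.
Proof. by []. Qed.

Lemma ed_fun n w a b : ed n w a -> ed n w b -> a = b.
Proof.
elim: n w a b => [|n IH] w a b; first by rewrite ed0.
move=> /ed_char [c [d [Hw [Ha Hc]]]] /ed_char [c' [d' [Hw' [Hb Hc']]]].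
rewrite -(cat_take_drop n a) -(cat_take_drop n b) Ha Hb.
move: Hw'; rewrite Hw => -[Ec]; subst c'.
case: Hc => [[E1 [E2 [E3 E4]]]|[E1 [E2 E3]]];
case: Hc' => [[E1' [E2' [E3' E4']]]|[E1' [E2' E3']]]; subst.
- by rewrite -E1 -E1'.
- by rewrite ltnn in E3.
- by rewrite ltnn in E3'.
- by rewrite (IH _ _ _ E1 E1').
Qed.

Lemma ed_inj n w a b : ed n a w -> ed n b w -> a = b.
Proof.
elim: n w a b => [|n IH] w a b; first by rewrite ed0.
move=> /ed_char [c [d [Ha [Hw Hc]]]] /ed_char [c' [d' [Hb [Hw' Hc']]]].
rewrite -(cat_take_drop n a) -(cat_take_drop n b) Ha Hb.
move: Hw'; rewrite Hw => -[Ed]; subst d'.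
case: Hc => [[E1 [E2 [E3 E4]]]|[E1 [E2 E3]]];
case: Hc' => [[E1' [E2' [E3' E4']]]|[E1' [E2' E3']]]; subst.
- by case: E4' => <-; rewrite E1 E1'.
- by move: E3' E2 => [->].
- by move: E4' E2' => [<-].
- by rewrite (IH _ _ _ E1 E1').
Qed.

Lemma ed_nc n a b : ed n.+1 a b -> take n a != take n b ->
  drop n a = [:: L] /\ drop n b = [:: 1] /\ ed n (take n a) (take n b).
Proof.
move=> /ed_char [c [d [Ha [Hb [[E1 _]|[E1 [E2 E3]]]]]]]; first by rewrite E1 eqxx.
by subst.
Qed.

Lemma key n w v x :
  igs_adj (R1_E L) R1_typ (R1_I L) n.+1 w v ->
  igs_adj (R1_E L) R1_typ (R1_I L) n.+1 v x ->
  take n w != take n v -> take n v != take n x -> w = x.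
Proof.
have L1 : L != 1 by case: L HL => [|[|]].
move=> /orP [] H1 /orP [] H2 N1 N2.
- have [_ [A _]] := @ed_nc _ _ _ H1 N1.
  have [B _] := @ed_nc _ _ _ H2 N2.
  by move: A; rewrite B => -[] E; rewrite E eqxx in L1.
- rewrite eq_sym in N2.
  have [A1 [_ A3]] := @ed_nc _ _ _ H1 N1.
  have [B1 [_ B3]] := @ed_nc _ _ _ H2 N2.
  by rewrite -(cat_take_drop n w) -(cat_take_drop n x) A1 B1 (@ed_inj _ _ _ _ A3 B3).
- rewrite eq_sym in N1.
  have [_ [A1 A3]] := @ed_nc _ _ _ H1 N1.
  have [_ [B1 B3]] := @ed_nc _ _ _ H2 N2.
  by rewrite -(cat_take_drop n w) -(cat_take_drop n x) A1 B1 (@ed_fun _ _ _ _ A3 B3).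
- rewrite eq_sym in N1; rewrite eq_sym in N2.
  have [A _] := @ed_nc _ _ _ H1 N1.
  have [_ [B _]] := @ed_nc _ _ _ H2 N2.
  by move: A; rewrite B => -[] E; rewrite E eqxx in L1.
Qed.

End S.

Lemma wedge_lt n (w v : seq nat) : size w = n.+1 -> wedge w v < n.+1 -> take n w != take n v.
Proof.
move=> Hs Hk; rewrite /wedge in Hk.
set a := (fun k => take k w != take k v) in Hk.
have Hh : has a (iota 0 (size w).+1).
  by rewrite has_find size_iota; rewrite Hs in Hk *; exact: leqW Hk.
have := nth_find 0 Hh; rewrite /a nth_iota; last first.
  by rewrite Hs in Hk *; exact: leqW Hk.
move: Hk; rewrite /a; set k := find _ _ => Hk.
have Hkn : k <= n by [].
move=> H; apply/negP => /eqP E; move/negP: H; apply.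
by apply/eqP; rewrite /= -(take_takel _ Hkn) E take_takel.
Qed.

Theorem lemma5p6 (L : nat) (HL : 3 <= L) (m : nat) (Hm : 1 < m)
  (p : seq (seq nat)) :
  R1_path L m p -> noncollapsing m p -> size (undup p) <= 2.
Proof.
case: m Hm => [|n] // _ [Hv Hadj] Hnc.
have Hsz i : i < size p -> size (nth [::] p i) = n.+1.
  by move=> Hi; have /andP [/eqP -> _] := all_nthP [::] Hv i Hi.
have step i : i.+2 < size p -> nth [::] p i.+2 = nth [::] p i.
  move=> Hi; symmetry; apply: (@key L HL n _ (nth [::] p i.+1)).
  - by apply: Hadj; apply: ltnW.
  - by apply: Hadj.
  - by apply: wedge_lt; [apply: Hsz; do 2 apply: ltnW | apply: Hnc; apply: ltnW].
  - by apply: wedge_lt; [apply: Hsz; apply: ltnW | apply: Hnc].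
have all2 i : (i < size p -> nth [::] p i = nth [::] p (odd i)) /\
              (i.+1 < size p -> nth [::] p i.+1 = nth [::] p (odd i.+1)).
  elim: i => [|i [IH1 IH2]]; first by split.
  split => // Hi; rewrite step //= negbK; apply: IH1.
  by apply: (leq_trans _ Hi); rewrite ltnS ltnW.
apply: (@leq_trans (size [:: nth [::] p 0; nth [::] p 1])) => //.
apply: uniq_leq_size; first exact: undup_uniq.
move=> x; rewrite mem_undup => /(nthP [::]) [i Hi <-].
rewrite (proj1 (all2 i) Hi).
by case: (odd i); rewrite !inE eqxx ?orbT.
Qed.
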